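(* Let $Sm(n)$ be the integer whose decimal expansion is the concatenation of $1,2,\ldots,n+1$. For every integer $n\geqslant 0$, put $$l=\lceil \log_{10}(n+2)\rceil,\qquad t_l=10^{l-1}-1,$$ $$\alpha_l=-\frac{10^{2l-1}+9\cdot 10^{l-1}}{(10^l-1)^2},\qquad \mu_l=-\frac{1}{10^l-1},\qquad \theta_l=\frac{s_2-2s_1+s_0}{(10^l-1)^2},$$ where $s_0=Sm(t_l)$, $s_1=Sm(t_l+1)$, $s_2=Sm(t_l+2)$. Then $$Sm(n)=\alpha_l+\mu_l\,(n-t_l)+\theta_l\,10^{l(n-t_l)}.$$
   Context: $Sm(0)=1$, $Sm(1)=12$, $Sm(2)=123$, $\ldots$ (Smarandache consecutive numbers). *)

(* Defs.v *)
From mathcomp Require Import all_boot all_order all_algebra.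
Set Implicit Arguments. Unset Strict Implicit. Unset Printing Implicit Defensive.

Fixpoint rdigits (fuel k : nat) : seq nat :=
  match fuel with
  | 0 => [::]
  | f.+1 => if k == 0 then [::] else k %% 10 :: rdigits f (k %/ 10)
  end.

(* Decimal expansion of k >= 1, most significant digit first. *)
Definition decdigits (k : nat) : seq nat := rev (rdigits k k).

Definition fromdigits (s : seq nat) : nat := foldl (fun a d => a * 10 + d) 0 s.

Definition Sm (n : nat) : nat :=
  fromdigits (flatten [seq decdigits k | k <- iota 1 n.+1]).

Example Sm_0 : Sm 0 = 1. Proof. by []. Qed.
Example Sm_1 : Sm 1 = 12. Proof. by []. Qed.

(* Main.v *)
Require Import Defs.
From mathcomp Require Import all_boot all_order all_algebra zify ring.
Import GRing.Theory Num.Theory.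

Lemma val_rdigits f x : x <= f ->
  foldr (fun d a => a * 10 + d) 0 (rdigits f x) = x.
Proof.
elim: f x => [|f IH] x /=; first by rewrite leqn0 => /eqP->.
case: eqP => [->//|/eqP x0 xf] /=.
rewrite IH; first by rewrite -divn_eq.
have: x %/ 10 < x by apply: ltn_Pdiv; lia.
lia.
Qed.

Lemma size_rdigits l f x : x <= f -> 10 ^ l <= x < 10 ^ l.+1 ->
  size (rdigits f x) = l.+1.
Proof.
elim: l f x => [|l IH] [|f] x /=.
- lia.
- rewrite expn0 expn1 => _ /andP[x1 x10]; have -> : x == 0 = false by lia.
  have -> : x %/ 10 = 0 by rewrite divn_small.
  by case: f.
- rewrite expnS; have := expn_gt0 10 l; lia.
- move=> xf /andP[lo hi].
  have x0 : 0 < x by have := expn_gt0 10 l.+1; lia.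
  have -> : x == 0 = false by lia.
  rewrite /= IH //.
  + have: x %/ 10 < x by apply: ltn_Pdiv; lia. lia.
  + rewrite leq_divRL // ltn_divLR // -!expnSr lo hi.
    done.
Qed.

Lemma fromdigits_dec x : fromdigits (decdigits x) = x.
Proof. by rewrite /fromdigits /decdigits foldl_rev val_rdigits. Qed.

Lemma foldl_shift s a : foldl (fun a d => a * 10 + d) a s =
  a * 10 ^ size s + foldl (fun a d => a * 10 + d) 0 s.
Proof.
elim: s a => [|d s IH] a /=; first by rewrite muln1 addn0.
rewrite IH [in RHS]IH expnS; ring.
Qed.

Lemma Sm_rec k : Sm k.+1 = Sm k * 10 ^ size (decdigits k.+2) + k.+2.
Proof.
have E : iota 1 k.+2 = iota 1 k.+1 ++ [:: k.+2] by rewrite -(addn1 k.+1) iotaD add1n addn1.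
rewrite /Sm E map_cat flatten_cat /fromdigits foldl_cat /=.
rewrite cats0 foldl_shift -/(fromdigits _) fromdigits_dec.
reflexivity.
Qed.

Lemma rec_range l k : 10 ^ l <= k.+2 < 10 ^ l.+1 ->
  Sm k.+1 = Sm k * 10 ^ l.+1 + k.+2.
Proof.
move=> H; rewrite Sm_rec /decdigits size_rev (@size_rdigits l) //.
Qed.

Local Open Scope ring_scope.

Lemma closed_form (p : rat) (x : nat -> rat) (N : nat) :
  10 * p - 1 != 0 ->
  (forall j, (j < N)%N -> x j.+1 = 10 * p * x j + (p + 1 + j%:R)) ->
  forall j, (j <= N)%N ->
  x j = - ((10 * p ^+ 2 + 9 * p) / (10 * p - 1) ^+ 2) - j%:R / (10 * p - 1)
        + (x 0%N + (10 * p ^+ 2 + 9 * p) / (10 * p - 1) ^+ 2) * (10 * p) ^+ j.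
Proof.
move=> D0 Hr k; elim: k => [|j IH] hj.
  by rewrite expr0 mulr1; field.
rewrite (Hr j) // IH ?(ltnW hj) // [(10 * p) ^+ j.+1]exprS -[j.+1]addn1 natrD.
by field.
Qed.

Theorem corollary1 (n : nat) :
  let l := up_log 10 n.+2 in
  let t := (10 ^ l.-1 - 1)%N in
  let s0 := Sm t in let s1 := Sm t.+1 in let s2 := Sm t.+2 in
  let alpha : rat := - ((10%:R ^+ (2 * l - 1) + 9 * 10%:R ^+ l.-1)
                         / (10%:R ^+ l - 1) ^+ 2) in
  let mu : rat := - (1 / (10%:R ^+ l - 1)) in
  let theta : rat := (s2%:R - 2 * s1%:R + s0%:R) / (10%:R ^+ l - 1) ^+ 2 in
  (Sm n)%:R = alpha + mu * (n%:R - t%:R) + theta * 10%:R ^+ (l * (n - t)).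
Proof.
move=> l t s0 s1 s2 alpha mu theta.
have lgt0 : (0 < l)%N by rewrite /l up_log_gt0.
have /andP[lo hi] := @up_log_bounds 10 n.+2 isT isT.
rewrite -/l in lo hi.
move: lgt0 lo hi; case Hl : l => [//|l'] _ /= lo hi.
have pg : (0 < 10 ^ l')%N by rewrite expn_gt0.
have tE : t = (10 ^ l' - 1)%N by rewrite /t Hl.
have tn : (t <= n)%N by rewrite tE; lia.
have Hrec : forall j, (t + j < n)%N -> Sm (t + j).+1 = (Sm (t + j) * 10 ^ l'.+1 + (t + j).+2)%N.
  move=> j hj; apply: rec_range; move: hi; rewrite tE expnS; lia.
have Hrec2 : forall j, (j <= 1)%N -> Sm (t + j).+1 = (Sm (t + j) * 10 ^ l'.+1 + (t + j).+2)%N.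
  move=> j hj; apply: rec_range; rewrite tE !expnS. lia.
set p : rat := 10%:R ^+ l'.
have D0 : 10 * p - 1 != 0.
  rewrite subr_eq0; apply/negP => /eqP H.
  have : (10 * 10 ^ l')%N == 1%N by rewrite -(eqr_nat rat) natrM natrX H.
  by rewrite eqn_leq leqNgt (leq_trans (isT : (1 < 10)%N)) // leq_pmulr.
have tR : t%:R = p - 1 :> rat by rewrite tE natrB // natrX.
have mR : (10 ^ l'.+1)%:R = 10 * p :> rat by rewrite natrX exprS.
pose x j : rat := (Sm (t + j))%:R.
have Hx : forall j, (j < n - t)%N -> x j.+1 = 10 * p * x j + (p + 1 + j%:R).
  move=> j hj; rewrite /x addnS Hrec; last by lia.
  rewrite -[(t + j).+2]addn2 !natrD natrM mR tR; ring.
have := @closed_form p x (n - t) D0 Hx _ (leqnn _).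
rewrite /x subnKC // addn0 => ->.
have E1 : s1%:R = 10 * p * s0%:R + (p + 1) :> rat.
  have := Hrec2 0%N isT; rewrite addn0 => H.
  rewrite /s1 /s0 H -[t.+2]addn2 !natrD natrM mR tR; ring.
have E2 : s2%:R = 10 * p * s1%:R + (p + 2) :> rat.
  have := Hrec2 1%N isT; rewrite addn1 => H.
  rewrite /s2 /s1 H -[t.+3]addn3 !natrD natrM mR tR; ring.
rewrite /alpha /mu /theta Hl /= -/p.
have e1 : (10%:R : rat) ^+ (2 * l'.+1 - 1) = 10 * p ^+ 2.
  have h : (2 * l'.+1 - 1 = (l' * 2).+1)%N by lia.
  by rewrite h exprS exprM.
have e2 : (10%:R : rat) ^+ l'.+1 = 10 * p by rewrite exprS.
have e3 : (10%:R : rat) ^+ (l'.+1 * (n - t)) = (10 * p) ^+ (n - t).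
  by rewrite exprM exprS.
rewrite e1 e2 e3 -natrB // E2 E1 /s0.
by field.
Qed.
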